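(* Let $l$ be a positive integer, $\epsilon\in(0,1)$, $\theta\in[0,1)$, and let $N$ be a positive integer with $N\ge 5.34\ln(4l/\epsilon)$. For $k=1,\dots,l$ let $N_{x,k}\sim\mathrm{Bin}\big(N,(1+\cos(2\pi 2^{k-1}\theta))/2\big)$ and $N_{y,k}\sim\mathrm{Bin}\big(N,(1+\sin(2\pi 2^{k-1}\theta))/2\big)$, all $2l$ variables independent. Put $t_k=\frac{1}{2\pi}\big(\mathrm{atan2}(2N_{y,k}/N-1,2N_{x,k}/N-1)\big)_{\mathrm{mod}\,2\pi}$ and $x(k)=(t_k-1/6)_{\mathrm{mod}\,1}$. Define $z(1)=x(1)$ and, for $k=1,\dots,l-1$, with $d_k=(x(k+1)-2z(k))_{\mathrm{mod}\,1}$: $z(k+1)=2z(k)+d_k$ if $d_k\in[0,1/3)$, $z(k+1)=2z(k)+1/3$ if $d_k\in[1/3,2/3)$, $z(k+1)=2z(k)$ if $d_k\in[2/3,1)$. Then with probability at least $1-\epsilon$, $\theta$ lies in the arc $\big[z(l)/2^{l-1},(z(l)+1/3)/2^{l-1}\big]$ on the circle of unit circumference (length $1/(3\cdot2^{l-1})$); in particular $\hat\theta=\big((z(l)+1/6)/2^{l-1}\big)_{\mathrm{mod}\,1}$ satisfies $\Pr\big(|\hat\theta-\theta|_1\le 1/(3\cdot 2^l)\big)\ge 1-\epsilon$.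
   Context: This models iterative phase estimation of $U_\theta=\mathrm{diag}(1,e^{i2\pi\theta})$ using a single qubit: at stage $k$, $U_\theta$ is applied $2^{k-1}$ times to $|\psi_x\rangle=(|0\rangle+|1\rangle)/\sqrt2$, and the result is measured $N$ times with $\{|\psi_x\rangle\langle\psi_x|,\mathbb{I}-|\psi_x\rangle\langle\psi_x|\}$ and $N$ times with $\{|\psi_y\rangle\langle\psi_y|,\mathbb{I}-|\psi_y\rangle\langle\psi_y|\}$, $|\psi_y\rangle=(|0\rangle+i|1\rangle)/\sqrt2$; $N_{x,k},N_{y,k}$ count outcomes $1$. $(a)_{\mathrm{mod}\,c}$ is the representative of $a$ in $[0,c)$; an arc $[a,b]$ with $b-a<1$ is $\{t_{\mathrm{mod}\,1}:t\in[a,b]\}$; $|\hat\theta-\theta|_1=\min((\hat\theta-\theta)_{\mathrm{mod}\,1},(\theta-\hat\theta)_{\mathrm{mod}\,1})$; $\mathrm{atan2}$ is the polar angle (any fixed convention at $(0,0)$). *)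

(* Defs.v *)
From HB Require Import structures.
From mathcomp Require Import all_boot all_order all_algebra.
From mathcomp Require Import boolp classical_sets reals exp trigo.
Set Implicit Arguments. Unset Strict Implicit. Unset Printing Implicit Defensive.
Import Order.TTheory GRing.Theory Num.Theory.
Local Open Scope ring_scope.

Section Defs.
Variable R : realType.

Definition modr (a c : R) : R := a - c * (Num.floor (a / c))%:~R.

(* polar angle of (x, y), in (-pi, pi]; convention atan2 0 0 = 0 *)
Definition atan2 (y x : R) : R :=
  if 0 < x then atan (y / x)
  else if x < 0 then (if 0 <= y then atan (y / x) + pi else atan (y / x) - pi)
  else if 0 < y then pi / 2
  else if y < 0 then - (pi / 2)
  else 0.

(* theta in the arc [a,b] (b - a < 1) of the circle of unit circumference *)
Definition in_arc (a b theta : R) : Prop :=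
  exists t : R, a <= t <= b /\ modr t 1 = theta.

Definition dist1 (u v : R) : R := Num.min (modr (u - v) 1) (modr (v - u) 1).

Definition binom_pmf (N : nat) (p : R) (j : nat) : R :=
  ('C(N, j))%:R * p ^+ j * (1 - p) ^+ (N - j).

Definition tval (N nx ny : nat) : R :=
  modr (atan2 (2 * ny%:R / N%:R - 1) (2 * nx%:R / N%:R - 1)) (2 * pi) / (2 * pi).

(* x(k+1) in 0-based indexing: stage k+1 of the paper *)
Definition xval (N : nat) (nx ny : nat -> nat) (k : nat) : R :=
  modr (tval N (nx k) (ny k) - 1 / 6) 1.

(* zval k = z(k+1) of the paper *)
Fixpoint zval (N : nat) (nx ny : nat -> nat) (k : nat) : R :=
  match k with
  | 0 => xval N nx ny 0
  | k'.+1 =>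
      let z := zval N nx ny k' in
      let d := modr (xval N nx ny k - 2 * z) 1 in
      if d < 1 / 3 then 2 * z + d
      else if d < 2 / 3 then 2 * z + 1 / 3
      else 2 * z
  end.

(* sample space: the outcomes (N_{x,k}, N_{y,k}) for k = 1..l (0-based index) *)
Definition outcome (l N : nat) := {ffun 'I_l -> 'I_N.+1 * 'I_N.+1}.

Definition cnt_x (l N : nat) (w : outcome l N) (k : nat) : nat :=
  odflt 0%N (omap (fun i : 'I_l => nat_of_ord (w i).1) (insub k)).
Definition cnt_y (l N : nat) (w : outcome l N) (k : nat) : nat :=
  odflt 0%N (omap (fun i : 'I_l => nat_of_ord (w i).2) (insub k)).

Definition joint_pmf (l N : nat) (theta : R) (w : outcome l N) : R :=
  \prod_(i < l)
    (binom_pmf N ((1 + cos (2 * pi * 2 ^+ i * theta)) / 2) (w i).1 *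
     binom_pmf N ((1 + sin (2 * pi * 2 ^+ i * theta)) / 2) (w i).2).

Definition prob (l N : nat) (theta : R) (E : outcome l N -> Prop) : R :=
  \sum_(w : outcome l N | `[< E w >]) joint_pmf theta w.

Definition zfinal (l N : nat) (w : outcome l N) : R :=
  zval N (cnt_x w) (cnt_y w) l.-1.

Definition theta_hat (l N : nat) (w : outcome l N) : R :=
  modr ((zfinal w + 1 / 6) / 2 ^+ l.-1) 1.

End Defs.
Arguments zfinal {R l N} w.
Arguments theta_hat {R l N} w.

(* Main.v *)
Require Import Defs.
From HB Require Import structures.
From mathcomp Require Import all_boot all_order all_algebra.
From mathcomp Require Import boolp classical_sets reals exp trigo.
From mathcomp Require Import functions topology normedtype sequences derive realfun.
From mathcomp Require Import ring lra.
Import Order.TTheory GRing.Theory Num.Theory numFieldNormedType.Exports.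
Local Open Scope ring_scope.

Section H.
Local Open Scope classical_set_scope.
Local Open Scope ring_scope.
Variable R : realType.

Lemma d_gt0 (p x : R) : 0 <= p <= 1 -> 0 < (1 - p) + p * expR x.
Proof.
move=> /andP[p0 p1]; have e0 := expR_gt0 x.
have [->|pn0] := eqVneq p 0; first by rewrite mul0r subr0 addr0.
have : 0 < p * expR x by rewrite mulr_gt0 // lt0r pn0 p0.
lra.
Qed.

Lemma psi_der (p x : R) : 0 <= p <= 1 ->
  is_derive x 1 (fun y => (1 - p) - (1 - p) / ((1 - p) + p * expR y))
    ((1 - p) * p * expR x / ((1 - p) + p * expR x) ^+ 2).
Proof.
move=> hp; have dn := @d_gt0 p x hp.
pose d : R -> R := cst (1 - p) + p \*: (@expR R).
have dx : d x != 0 by rewrite /d /= gt_eqF.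
have hd : is_derive x 1 d (0 + p *: expR x).
  exact: is_deriveD (is_derive_cst _ _ _) (is_deriveZ _ (is_derive_expR x)).
have hv := is_deriveV dx hd.
have hq := is_deriveZ (1 - p) hv.
have hpsi := is_deriveB (is_derive_cst (1 - p) x 1) hq.
have -> : (fun y => (1 - p) - (1 - p) / ((1 - p) + p * expR y)) =
   cst (1 - p) - (1 - p) \*: (fun y => (d y)^-1).
  by apply/funext => y.
apply: (is_derive_eq hpsi).
rewrite (_ : d x = 1 - p + p * expR x) // /GRing.scale /= add0r.
field. by rewrite gt_eqF.
Qed.

Lemma der_ex (f : R -> R) x df : is_derive x (1:R) f df -> derivable f x 1.
Proof. by case. Qed.

Lemma der_cont (f df : R -> R) a b : (forall x, is_derive x (1:R) f (df x)) ->
  {within `[a, b], continuous f}.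
Proof. by move=> h; apply: derivable_within_continuous => y _; exact: der_ex (h y). Qed.

Lemma psi_le (p c : R) : 0 <= p <= 1 -> 0 <= c ->
  (1 - p) - (1 - p) / ((1 - p) + p * expR c) <= c / 4.
Proof.
move=> hp c0.
set f := fun y => (1 - p) - (1 - p) / ((1 - p) + p * expR y).
have [xi /andP[xi0 xic] E] := MVT_segment c0 (fun x _ => @psi_der p x hp)
  (@der_cont _ _ 0 c (fun y => @psi_der p y hp)).
have f0 : f 0 = 0.
  by rewrite /f expR0 mulr1 subrK divr1 subrr.
have -> : (1 - p) - (1 - p) / ((1 - p) + p * expR c) = f c by [].
suff : f c - f 0 <= c / 4 by rewrite f0 subr0.
rewrite E subr0.
have dn := @d_gt0 p xi hp.
have ex := expR_gt0 xi.
move: hp => /andP[p0 p1].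
have h : (1 - p) * p * expR xi / (1 - p + p * expR xi) ^+ 2 <= 1 / 4.
  rewrite ler_pdivrMr; last by rewrite exprn_gt0.
  rewrite mul1r ler_pdivlMl //.
  have := sqr_ge0 (1 - p - p * expR xi). nra.
have := ler_wpM2r c0 h; lra.
Qed.

Lemma is_derive_ext (f g : R -> R) x df df' : (forall y, f y = g y) -> df = df' ->
  is_derive x (1:R) f df -> is_derive x (1:R) g df'.
Proof. by move=> /funext -> ->. Qed.

Lemma F_der (p x : R) :
  is_derive x 1 (fun y => ((1 - p) + p * expR y) * expR (- (y * p + y ^+ 2 / 8)))
    (expR (- (x * p + x ^+ 2 / 8)) * (p * expR x - ((1 - p) + p * expR x) * (p + x / 4))).
Proof.
pose d : R -> R := cst (1 - p) + p \*: (@expR R).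
have hd : is_derive x 1 d (0 + p *: expR x).
  exact: is_deriveD (is_derive_cst _ _ _) (is_deriveZ _ (is_derive_expR x)).
pose g : R -> R := - (p \*: id + (1/8) \*: ((@id R) ^+ 2)).
have hg : is_derive x 1 g (- (p *: 1 + (1/8) *: ((2%:R * x ^+ 1) *: 1))).
  by apply: is_deriveN; apply: is_deriveD; apply: is_deriveZ.
have hE := is_derive1_comp (is_derive_expR (g x)) hg.
have hF := is_deriveM hd hE.
have gE y : g y = - (y * p + y ^+ 2 / 8).
  by rewrite [LHS](_ : _ = - (p * y + 1/8 * (y * y))) //; field.
apply: (@is_derive_ext _ (fun y => ((1 - p) + p * expR y) * expR (- (y * p + y ^+ 2 / 8))) x _ _ _ _ hF).
  by move=> y; rewrite -gE.
rewrite (_ : d x = 1 - p + p * expR x) // gE.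
by rewrite /GRing.scale /= !mulr1 add0r gE; field.
Qed.

Lemma hoeff_lem (p lam : R) : 0 <= p <= 1 -> 0 <= lam ->
  (1 - p) + p * expR lam <= expR (lam * p + lam ^+ 2 / 8).
Proof.
move=> hp l0.
set F := fun y => ((1 - p) + p * expR y) * expR (- (y * p + y ^+ 2 / 8)).
have [xi /andP[xi0 xil] E] := MVT_segment l0 (fun x _ => @F_der p x)
  (@der_cont _ _ 0 lam (fun y => @F_der p y)).
have F0 : F 0 = 1.
  by rewrite /F expR0 mulr1 subrK mul0r expr0n /= mul0r addr0 oppr0 expR0 mulr1.
have dn := @d_gt0 p xi hp.
have hps := @psi_le p xi hp xi0.
have h2 : (1 - p) * ((1 - p) + p * expR xi) - (1 - p) <= ((1 - p) + p * expR xi) * xi / 4.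
  have := ler_wpM2l (ltW dn) hps.
  by rewrite mulrBr [_ * (_ / _)]mulrC divfK ?gt_eqF // mulrA mulrC.
have Fle : F lam <= 1.
  suff : F lam - F 0 <= 0 by rewrite F0 subr_le0.
  rewrite E subr0; apply: mulr_le0_ge0 => //.
  apply: mulr_ge0_le0; first exact: expR_ge0.
  move: hp => /andP[p0 p1]. nra.
by move: Fle; rewrite /F expRN ler_pdivrMr ?expR_gt0 // mul1r.
Qed.
End H.

Set Implicit Arguments. Unset Strict Implicit.

Section B.
Variable R : realType.

Lemma binom_ge0 N (p : R) j : 0 <= p <= 1 -> 0 <= binom_pmf N p j.
Proof.
move=> /andP[p0 p1]; rewrite /binom_pmf.
by rewrite !mulr_ge0 // exprn_ge0 // subr_ge0.
Qed.

Lemma binom_sum N (p : R) : \sum_(j < N.+1) binom_pmf N p j = 1.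
Proof.
have := exprDn (1 - p) p N; rewrite subrK expr1n => ->.
apply: eq_bigr => j _; rewrite /binom_pmf -mulr_natl; ring.
Qed.

Lemma tail_up N (p d : R) : 0 <= p <= 1 -> 0 <= d -> (0 < N)%N ->
  \sum_(j < N.+1 | p + d <= j%:R / N%:R) binom_pmf N p j
    <= expR (- (2 * N%:R * d ^+ 2)).
Proof.
move=> hp d0 N0.
have Nr : (0 : R) < N%:R by rewrite ltr0n.
set lam := 4 * d.
set K := expR (- (lam * (N%:R * (p + d)))).
have l0 : 0 <= lam by rewrite /lam; lra.
have step1 : \sum_(j < N.+1 | p + d <= j%:R / N%:R) binom_pmf N p j <=
    \sum_(j < N.+1) binom_pmf N p j * (expR (lam * j%:R) * K).
  rewrite big_mkcond; apply: ler_sum => j _; case: ifP => h.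
    rewrite -[X in X <= _]mulr1; apply: ler_wpM2l; first exact: binom_ge0.
    rewrite /K -expRD -[leLHS]expR0 ler_expR.
    move: h; rewrite ler_pdivlMr // => h.
    rewrite subr_ge0; apply: ler_wpM2l => //; lra.
  by rewrite mulr_ge0 ?binom_ge0 // mulr_ge0 // expR_ge0.
have step2 : \sum_(j < N.+1) binom_pmf N p j * (expR (lam * j%:R) * K) =
    K * ((1 - p) + p * expR lam) ^+ N.
  rewrite exprDn big_distrr /=; apply: eq_bigr => j _.
  rewrite /binom_pmf mulrC (mulrC lam) expRM_natl -mulr_natl exprMn; ring.
apply: (le_trans step1); rewrite step2.
move: (hp) => /andP[p0 p1].
have dg := @d_gt0 R p lam hp.
have := @hoeff_lem R p lam hp l0 => hh.
have hh2 : ((1 - p) + p * expR lam) ^+ N <= expR (lam * p + lam ^+ 2 / 8) ^+ N.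
  by apply: lerXn2r => //; rewrite nnegrE ?expR_ge0 ?ltW.
apply: le_trans (ler_wpM2l (expR_ge0 _) hh2) _.
rewrite -expRM_natl /K -expRD ler_expR /lam. 
by rewrite le_eqVlt; apply/orP; left; apply/eqP; rewrite /lam; field.
Qed.

Lemma binom_rev N (p : R) (j : 'I_N.+1) :
  binom_pmf N p (rev_ord j) = binom_pmf N (1 - p) j.
Proof.
have jN : (j <= N)%N by rewrite -ltnS.
rewrite /binom_pmf /= subnS subSn // subKn //= bin_sub // (_ : 1 - (1 - p) = p); [ring | ring].
Qed.

Lemma tail_low N (p d : R) : 0 <= p <= 1 -> 0 <= d -> (0 < N)%N ->
  \sum_(j < N.+1 | j%:R / N%:R <= p - d) binom_pmf N p j
    <= expR (- (2 * N%:R * d ^+ 2)).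
Proof.
move=> hp d0 N0.
have Nr : (0 : R) < N%:R by rewrite ltr0n.
have hq : 0 <= 1 - p <= 1 by move: hp => /andP[? ?]; apply/andP; split; lra.
rewrite (reindex_inj rev_ord_inj) /=.
under eq_bigr => j _ do rewrite binom_rev.
apply: le_trans _ (tail_up hq d0 N0); rewrite le_eqVlt; apply/orP; left; apply/eqP.
apply: eq_bigl => j.
have jN : (j <= N)%N by rewrite -ltnS.
rewrite subnS subSn //= natrB // mulrBl divff ?gt_eqF //.
by apply/idP/idP => h; lra.
Qed.

Lemma tail_two N (p d : R) : 0 <= p <= 1 -> 0 <= d -> (0 < N)%N ->
  \sum_(j < N.+1 | d <= `|j%:R / N%:R - p|) binom_pmf N p j
    <= 2 * expR (- (2 * N%:R * d ^+ 2)).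
Proof.
move=> hp d0 N0.
apply: (@le_trans _ _ (\sum_(j < N.+1) ((if p + d <= j%:R / N%:R then binom_pmf N p j else 0)
   + (if j%:R / N%:R <= p - d then binom_pmf N p j else 0)))).
  rewrite big_mkcond; apply: ler_sum => j _.
  have b0 := binom_ge0 N j hp.
  case: ifP => h; last by case: ifP; case: ifP => //; lra.
  move: h; case: (lerP 0 (j%:R / N%:R - p)) => hs.
    rewrite ger0_norm // => h; have -> : p + d <= j%:R / N%:R by lra.
    by case: ifP; lra.
  rewrite ltr0_norm // => h; have -> : j%:R / N%:R <= p - d by lra.
  by case: ifP; lra.
rewrite big_split /= -!big_mkcond.
have := tail_up hp d0 N0; have := tail_low hp d0 N0; lra.
Qed.
End B.

Section P.
Variable R : realType.

Lemma marg (l : nat) (T : finType) (F : 'I_l -> T -> R) (A : pred T) (i0 : 'I_l) :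
  (forall i, \sum_t F i t = 1) ->
  \sum_(w : {ffun 'I_l -> T} | A (w i0)) \prod_i F i (w i) = \sum_(t | A t) F i0 t.
Proof.
move=> h1.
pose Q := fun i => [pred t | (i != i0) || A t].
have E : \prod_i \sum_(t | Q i t) F i t = \sum_(f in family Q) \prod_i F i (f i)
  by apply: bigA_distr_big_dep.
rewrite (bigD1 i0) //= (eq_bigl (fun t => A t)) in E; last by move=> t; rewrite /Q /= eqxx.
have P1 : \prod_(i | i != i0) \sum_(t | Q i t) F i t = 1.
  apply: big1 => i ni0; rewrite -[RHS](h1 i); apply: eq_bigl => t; by rewrite /Q /= ni0.
rewrite P1 mulr1 in E.
rewrite E; apply: eq_bigl => f.
apply/idP/familyP => [Af i|/(_ i0)]; last by rewrite inE /Q /= eqxx.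
by rewrite inE /Q /=; case: (eqVneq i i0) => [->|].
Qed.

Lemma pair_marg (T1 T2 : finType) (G : T1 -> R) (H : T2 -> R) (A : pred T1) :
  \sum_t H t = 1 ->
  \sum_(t : T1 * T2 | A t.1) G t.1 * H t.2 = \sum_(a | A a) G a.
Proof.
move=> h; rewrite (eq_bigl (fun t : T1 * T2 => A t.1 && xpredT t.2)); last by move=> t; rewrite andbT.
rewrite -(pair_big A xpredT (fun a b => G a * H b)) /=.
by apply: eq_bigr => a _; rewrite -big_distrr /= h mulr1.
Qed.

Lemma pair_marg2 (T1 T2 : finType) (G : T1 -> R) (H : T2 -> R) (A : pred T2) :
  \sum_t G t = 1 ->
  \sum_(t : T1 * T2 | A t.2) G t.1 * H t.2 = \sum_(b | A b) H b.
Proof.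
move=> h; rewrite (eq_bigl (fun t : T1 * T2 => xpredT t.1 && A t.2)); last by move=> t.
rewrite -(pair_big xpredT A (fun a b => G a * H b)) /=.
rewrite exchange_big /=; apply: eq_bigr => b _; by rewrite -big_distrl /= h mul1r.
Qed.

Lemma union_bound (T : finType) (f : T -> R) (E : T -> Prop) (l : nat)
    (B C : 'I_l -> T -> Prop) :
  (forall w, 0 <= f w) -> \sum_w f w = 1 ->
  (forall w, (forall k, ~ B k w /\ ~ C k w) -> E w) ->
  1 - \sum_k (\sum_(w | `[< B k w >]) f w + \sum_(w | `[< C k w >]) f w)
    <= \sum_(w | `[< E w >]) f w.
Proof.
move=> f0 f1 hE.
rewrite -f1 (bigID (fun w => `[< E w >])) /=.
suff : \sum_(w | ~~ `[< E w >]) f w <=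
   \sum_k (\sum_(w | `[< B k w >]) f w + \sum_(w | `[< C k w >]) f w) by lra.
have -> : \sum_k (\sum_(w | `[< B k w >]) f w + \sum_(w | `[< C k w >]) f w)
   = \sum_w \sum_k ((if `[< B k w >] then f w else 0) + (if `[< C k w >] then f w else 0)).
  rewrite exchange_big /=; apply: eq_bigr => k _.
  by rewrite big_split /= -!big_mkcond.
rewrite big_mkcond /=; apply: ler_sum => w _.
have s0 : forall k, 0 <= (if `[< B k w >] then f w else 0) + (if `[< C k w >] then f w else 0).
  by move=> k; case: ifP; case: ifP => _ _; rewrite ?addr0 ?add0r ?addr_ge0.
case: ifP => hw; last by apply: sumr_ge0 => k _.
have [k hk] : exists k, B k w \/ C k w.
  apply/not_existsP => hn; move/negP: hw; apply; apply/asboolP; apply: hE => k.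
  by split => h; apply: (hn k); [left|right].
rewrite (bigD1 k) //=.
set S := (X in _ + X).
have hr : 0 <= S by apply: sumr_ge0 => i _; exact: s0.
have f0w := f0 w.
suff : f w <= (if `[< B k w >] then f w else 0) + (if `[< C k w >] then f w else 0) by lra.
case: hk => h.
  by rewrite (asboolT h); case: ifP => _; lra.
by rewrite (asboolT h); case: ifP => _; lra.
Qed.
End P.

Section M.
Variable R : realType.
Implicit Types a b : R.

Lemma modr1E a : modr a 1 = a - (Num.floor a)%:~R.
Proof. by rewrite /modr divr1 mul1r. Qed.

Lemma modr1_range a : 0 <= modr a 1 < 1.
Proof.
rewrite modr1E; have /andP[h1 h2] := floor_itv a.
by rewrite intrD in h2; apply/andP; split; lra.
Qed.

Lemma modr1_int a : exists m : int, a = modr a 1 + m%:~R.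
Proof. by exists (Num.floor a); rewrite modr1E subrK. Qed.

Lemma modr1_uniq a b (m : int) : 0 <= b < 1 -> a = b + m%:~R -> modr a 1 = b.
Proof.
move=> /andP[b0 b1] ->; rewrite modr1E.
rewrite (@floor_def _ _ m) ?addrK //.
by rewrite intrD; apply/andP; split; lra.
Qed.

Lemma modr1_shift a (m : int) : modr (a + m%:~R) 1 = modr a 1.
Proof.
have [n hn] := modr1_int a.
apply: (@modr1_uniq _ _ (n + m)); first exact: modr1_range.
by rewrite {1}hn intrD addrA.
Qed.

Lemma pow2_int k : exists m : int, (2 : R) ^+ k = m%:~R.
Proof.
elim: k => [|k [m hm]]; first by exists 1.
by exists (2 * m); rewrite exprS hm intrM.
Qed.

Lemma modr_c a c : exists k : int, modr a c = a - c * k%:~R.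
Proof. by exists (Num.floor (a / c)). Qed.

End M.

Section Z.
Variable R : realType.

Lemma modr1_cases (a : R) : -1 <= a < 1 ->
  (0 <= a /\ modr a 1 = a) \/ (a < 0 /\ modr a 1 = a + 1).
Proof.
move=> /andP[a1 a2]; case: (lerP 0 a) => ha.
  left; split => //; apply: (@modr1_uniq _ _ _ 0) => //; first by apply/andP.
  by rewrite addr0.
right; split => //; apply: (@modr1_uniq _ _ _ (-1)).
  by apply/andP; split; lra.
by rewrite intrN /=; lra.
Qed.

Lemma zval_inv (N : nat) (nx ny : nat -> nat) (th : R) k :
  0 <= th < 1 ->
  (forall i, (i <= k)%N -> 0 < modr (2 ^+ i * th - xval R N nx ny i) 1 < 1 / 3) ->
  exists t, zval R N nx ny k <= 2 ^+ k * t <= zval R N nx ny k + 1 / 3 /\ modr t 1 = th.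
Proof.
move=> hth; elim: k => [|k IH] H.
  have /andP[g1 g2] := H 0%N isT; rewrite expr0 mul1r in g1 g2.
  have [n hn] := modr1_int (th - xval R N nx ny 0).
  exists (th - n%:~R); split.
    rewrite expr0 mul1r /=; apply/andP; split; lra.
  apply: (@modr1_uniq _ _ _ (- n)) => //; by rewrite intrN.
have [t [/andP[t1 t2] ht]] := IH (fun i hi => H i (leqW hi)).
exists t.
have [n hn] := modr1_int t; rewrite ht in hn.
have [P hP] := pow2_int R k.+1.
set z := zval R N nx ny k.
set x := xval R N nx ny k.+1.
have /andP[g1 g2] := H k.+1 (leqnn _).
have {t1}t1 : z <= 2 ^+ k * t := t1.
have {t2}t2 : 2 ^+ k * t <= z + 1 / 3 := t2.
have {g1}g1 : 0 < modr (2 ^+ k.+1 * th - x) 1 := g1.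
have {g2}g2 : modr (2 ^+ k.+1 * th - x) 1 < 1 / 3 := g2.
set S := 2 ^+ k.+1 * t.
have SE : S - x = (2 ^+ k.+1 * th - x) + (P * n)%:~R.
  by rewrite /S hn intrM -hP; ring.
have [m hm] := modr1_int (x - 2 * z).
set d := modr (x - 2 * z) 1.
have {hm}hm : x - 2 * z = d + m%:~R := hm.
have /andP[d0 d1] : 0 <= d < 1 by exact: modr1_range.
have Sb : 2 * z <= S <= 2 * z + 2 / 3.
  by rewrite /S exprS -mulrA; apply/andP; split; lra.
have uE : modr (S - 2 * z - d) 1 = modr (2 ^+ k.+1 * th - x) 1.
  rewrite -(modr1_shift (2 ^+ k.+1 * th - x) (P * n)) -SE.
  rewrite (_ : S - x = (S - 2 * z - d) + (- m)%:~R) ?modr1_shift //.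
  rewrite intrN; lra.
rewrite -uE in g1 g2.
have cs : -1 <= S - 2 * z - d < 1 by apply/andP; split; lra.
have key : (0 < S - 2 * z - d < 1 / 3) \/ (0 < S - 2 * z - d + 1 < 1 / 3).
  case: (modr1_cases cs) => [[_ e]|[_ e]]; rewrite e in g1 g2.
    by left; apply/andP.
  by right; apply/andP.
have -> : zval R N nx ny k.+1 = (if d < 1 / 3 then 2 * z + d
      else if d < 2 / 3 then 2 * z + 1 / 3 else 2 * z) by [].
split => //.
case: ifP => h1; last case: ifP => h2; apply/andP; split;
  case: key => /andP[k1 k2]; rewrite -/S; lra.
Qed.
End Z.

Section G.
Variable R : realType.

Lemma cos_int (x : R) (m : int) : cos (x + 2 * pi * m%:~R) = cos x.
Proof.
case: m => n.
  rewrite (_ : 2 * pi * (Posz n)%:~R = (pi *+ 2) *+ n); last by rewrite -mulr_natl -mulr_natr /=; ring.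
  by apply: periodicn; exact: cosD2pi.
rewrite NegzE intrN (_ : 2 * pi * - (Posz n.+1)%:~R = - ((pi *+ 2) *+ n.+1)); last first.
  by rewrite -mulr_natl -mulr_natr /=; ring.
by rewrite -[in RHS](subrK ((pi *+ 2) *+ n.+1) x) (periodicn (@cosD2pi R)).
Qed.

Lemma cos_pi3 : cos (pi / 3) = 1 / 2 :> R.
Proof.
set t := pi / 3.
have c0 : 0 < cos t.
  apply: cos_gt0_pihalf; have := pi_gt0 R; rewrite /t => hp; apply/andP; split; lra.
have e : cos pi = cos (t *+ 2 + t) by congr cos; rewrite /t; field.
rewrite cospi cosD cos_mulr2n sin_mulr2n in e.
have := cos2Dsin2 t => h.
have : (cos t + 1) * (2 * cos t - 1) ^+ 2 = 0.
  rewrite !expr2 in e h *. nra.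
move/eqP; rewrite mulf_eq0 expf_eq0 /= => /orP[/eqP|/eqP]; first by lra.
by lra.
Qed.

Lemma cos_gt_half (v : R) : 1 / 2 < cos (2 * pi * v) ->
  modr v 1 < 1 / 6 \/ 5 / 6 < modr v 1.
Proof.
have [m hm] := modr1_int v.
have /andP[w0 w1] := modr1_range v.
set w := modr v 1 in hm w0 w1 *.
rewrite hm mulrDr cos_int -cos_pi3 => h.
have pi0 := pi_gt0 R.
case: (lerP w (1/2)) => hw.
  left; move: h; rewrite ltr_cos; first by move=> h'; nra.
    by rewrite in_itv /=; apply/andP; split; nra.
  by rewrite in_itv /=; apply/andP; split; nra.
right.
have e : cos (2 * pi * w) = cos (2 * pi * (1 - w)).
  rewrite -cosN (_ : - (2 * pi * w) = 2 * pi * (1 - w) + 2 * pi * (-1)%:~R) ?cos_int //.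
  by rewrite intrN /=; ring.
move: h; rewrite e ltr_cos; first by move=> h'; nra.
  by rewrite in_itv /=; apply/andP; split; nra.
by rewrite in_itv /=; apply/andP; split; nra.
Qed.

Lemma atan_cs (u : R) : 0 < cos (atan u) /\ sin (atan u) = u * cos (atan u).
Proof.
have c0 : 0 < cos (atan u).
  by rewrite cos_atan invr_gt0 sqrtr_gt0; have := sqr_ge0 u; lra.
split => //; rewrite -{2}(atanK u) /tan divfK //; exact: lt0r_neq0.
Qed.

Lemma cos_subpi (a : R) : cos (a - pi) = - cos a.
Proof. by rewrite -[in RHS](subrK pi a) cosDpi opprK. Qed.

Lemma sin_subpi (a : R) : sin (a - pi) = - sin a.
Proof. by rewrite -[in RHS](subrK pi a) sinDpi opprK. Qed.

Lemma atan2_polar (X Y : R) : X <> 0 \/ Y <> 0 ->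
  exists r, 0 < r /\ X = r * cos (atan2 Y X) /\ Y = r * sin (atan2 Y X).
Proof.
move=> hXY.
have [c0 sE] := atan_cs (Y / X).
set C := cos (atan (Y / X)) in c0 sE *.
have Cn : C != 0 by exact: lt0r_neq0.
rewrite /atan2.
case: (ltrP 0 X) => hX.
  exists (X / C); split; first by rewrite divr_gt0.
  by rewrite -/C sE; split; field; rewrite ?gt_eqF ?Cn.
case: (ltrP X 0) => hX2.
  have Xn : X != 0 by rewrite lt_eqF.
  case: (lerP 0 Y) => hY.
    exists (- X / C); split; first by rewrite divr_gt0 // oppr_gt0.
    rewrite cosDpi sinDpi -/C sE; by split; field; rewrite ?Xn ?Cn.
  exists (- X / C); split; first by rewrite divr_gt0 // oppr_gt0.
  rewrite cos_subpi sin_subpi -/C sE; by split; field; rewrite ?Xn ?Cn.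
have X0 : X = 0 by apply/eqP; rewrite eq_le hX hX2.
have Yn : Y <> 0 by case: hXY.
case: (ltrP 0 Y) => hY.
  by exists Y; rewrite cos_pihalf sin_pihalf mulr0 mulr1.
case: (ltrP Y 0) => hY2.
  by exists (- Y); rewrite cosN sinN cos_pihalf sin_pihalf mulr0 oppr_gt0 mulrN mulr1 opprK.
by exfalso; apply: Yn; apply/eqP; rewrite eq_le hY hY2.
Qed.

Lemma est_good (phi X Y : R) :
  (X - cos (2 * pi * phi)) ^+ 2 + (Y - sin (2 * pi * phi)) ^+ 2 < 3 / 4 ->
  0 < modr (phi - modr (modr (atan2 Y X) (2 * pi) / (2 * pi) - 1 / 6) 1) 1 < 1 / 3.
Proof.
move=> hE.
set c := cos (2 * pi * phi) in hE *.
set s := sin (2 * pi * phi) in hE *.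
have cs1 : c ^+ 2 + s ^+ 2 = 1 by rewrite /c /s cos2Dsin2.
have hXY : X <> 0 \/ Y <> 0.
  case: (eqVneq X 0) => [X0|]; last by left; apply/eqP.
  case: (eqVneq Y 0) => [Y0|]; last by right; apply/eqP.
  by exfalso; move: hE; rewrite X0 Y0 !sub0r !sqrrN cs1; lra.
set b := atan2 Y X.
have [r [r0 [XE YE]]] := atan2_polar hXY; rewrite -/b in XE YE.
have csb : cos b ^+ 2 + sin b ^+ 2 = 1 by rewrite cos2Dsin2.
have hcos : 1 / 2 < cos (b - 2 * pi * phi).
  rewrite cosB -/c -/s.
  set U := (X - c) * c + (Y - s) * s.
  have hU : U ^+ 2 <= (X - c) ^+ 2 + (Y - s) ^+ 2.
    have := sqr_ge0 ((X - c) * s - (Y - s) * c); rewrite /U; nra.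
  have hr2 : r ^+ 2 = X ^+ 2 + Y ^+ 2 by rewrite XE YE !exprMn -mulrDr csb mulr1.
  have hXc : X * c + Y * s = 1 + U by rewrite /U; nra.
  have U1 : 0 < 1 + U by nra.
  have hr3 : r ^+ 2 = 1 + 2 * U + ((X - c) ^+ 2 + (Y - s) ^+ 2).
    rewrite hr2 /U; move: cs1; rewrite !expr2 => cs1'; lra.
  have h4 : r ^+ 2 < (2 * (1 + U)) ^+ 2.
    rewrite hr3; have := sqr_ge0 (2 * U + 3 / 2); rewrite !expr2; lra.
  have h5 : r < 2 * (1 + U).
    case: (ltrP r (2 * (1 + U))) => // h; move: h4; rewrite !expr2; nra.
  have : r < 2 * (X * c + Y * s) by rewrite hXc.
  rewrite XE YE; nra.
have [k hk] := modr_c b (2 * pi).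
have pi0 := pi_gt0 R.
have p2 : (2 * pi : R) != 0 by rewrite gt_eqF // mulr_gt0.
set v := b / (2 * pi) - phi.
have hv : 2 * pi * v = b - 2 * pi * phi.
  by rewrite /v mulrBr mulrCA divff ?mulr1.
rewrite -hv in hcos.
have [n hn] := modr1_int v.
set tv := modr b (2 * pi) / (2 * pi).
have tvE : tv = b / (2 * pi) - k%:~R by rewrite /tv hk mulrBl mulrAC divff ?mul1r.
have [m hm] := modr1_int (tv - 1 / 6).
set xv := modr (tv - 1 / 6) 1 in hm *.
have /andP[w0 w1] := modr1_range v.
case: (cos_gt_half hcos) => hw.
  rewrite (@modr1_uniq _ _ (1 / 6 - modr v 1) (k + m - n)).
    by apply/andP; split; lra.
  by apply/andP; split; lra.
  rewrite !intrD intrN; move: hm hn; rewrite tvE /v; lra.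
rewrite (@modr1_uniq _ _ (7 / 6 - modr v 1) (k + m - n - 1)).
  by apply/andP; split; lra.
  by apply/andP; split; lra.
rewrite !intrD !intrN; move: hm hn; rewrite tvE /v; lra.
Qed.
End G.

Section F.
Variable R : realType.

Lemma cnt_xE l N (w : outcome l N) k (hk : (k < l)%N) :
  cnt_x w k = (w (Ordinal hk)).1.
Proof. by rewrite /cnt_x insubT. Qed.

Lemma cnt_yE l N (w : outcome l N) k (hk : (k < l)%N) :
  cnt_y w k = (w (Ordinal hk)).2.
Proof. by rewrite /cnt_y insubT. Qed.

Lemma dev_sq (n N : nat) (a d : R) : (0 < N)%N ->
  `|n%:R / N%:R - (1 + a) / 2| < d ->
  (2 * n%:R / N%:R - 1 - a) ^+ 2 < 4 * d ^+ 2.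
Proof.
move=> N0 /ltr_normlP [h1 h2].
have -> : 2 * n%:R / N%:R - 1 - a = 2 * (n%:R / N%:R - (1 + a) / 2).
  by rewrite -mulrA; field; rewrite pnatr_eq0 -lt0n.
set y := n%:R / N%:R - (1 + a) / 2 in h1 h2 *.
rewrite !expr2; nra.
Qed.

Lemma dist1_le (h t e : R) : `|h - t| <= e -> e < 1 ->
  dist1 (modr h 1) (modr t 1) <= e.
Proof.
move=> /ler_normlP [h1 h2] e1.
have [a ha] := modr1_int h; have [b hb] := modr1_int t.
rewrite /dist1 ge_min; case: (lerP 0 (h - t)) => s.
  apply/orP; left.
  rewrite (@modr1_uniq _ _ (h - t) (b - a)); first lra.
    by apply/andP; split; lra.
  by rewrite intrB; lra.
apply/orP; right.
rewrite (@modr1_uniq _ _ (t - h) (a - b)); first lra.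
  by apply/andP; split; lra.
by rewrite intrB; lra.
Qed.

Lemma main_good l N (th d : R) (w : outcome l N) :
  (0 < l)%N -> (0 < N)%N -> 0 <= th < 1 -> d ^+ 2 = 25 / 267 ->
  (forall k : 'I_l,
     `|((w k).1)%:R / N%:R - (1 + cos (2 * pi * 2 ^+ k * th)) / 2| < d /\
     `|((w k).2)%:R / N%:R - (1 + sin (2 * pi * 2 ^+ k * th)) / 2| < d) ->
  in_arc (zfinal w / 2 ^+ l.-1) ((zfinal w + 1 / 3) / 2 ^+ l.-1) th /\
  dist1 (theta_hat w) th <= 1 / (3 * 2 ^+ l).
Proof.
move=> l0 N0 hth d2 H.
have est : forall i, (i <= l.-1)%N ->
    0 < modr (2 ^+ i * th - xval R N (cnt_x w) (cnt_y w) i) 1 < 1 / 3.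
  move=> i hi; have hk : (i < l)%N by rewrite (leq_ltn_trans hi) // prednK.
  have [h1 h2] := H (Ordinal hk).
  rewrite /xval /tval (cnt_xE w hk) (cnt_yE w hk); apply: est_good.
  have := dev_sq N0 h1; have := dev_sq N0 h2.
  rewrite d2 /= !mulrA; lra.
have [t [/andP[t1 t2] ht]] := zval_inv hth est.
have p0 : (0 : R) < 2 ^+ l.-1 by rewrite exprn_gt0.
have zE : zfinal w = zval R N (cnt_x w) (cnt_y w) l.-1 by [].
split.
  exists t; split => //; rewrite zE; apply/andP; split.
    by rewrite ler_pdivrMr // mulrC.
  by rewrite ler_pdivlMr // mulrC.
rewrite /theta_hat zE -ht.
set z := zval R N (cnt_x w) (cnt_y w) l.-1 in t1 t2 *.
set h := (z + 1 / 6) / 2 ^+ l.-1.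
have lE : (2 : R) ^+ l = 2 * 2 ^+ l.-1 by rewrite -exprS prednK.
have hb : `|h - t| <= 1 / (3 * 2 ^+ l).
  set P := (2 : R) ^+ l.-1 in p0 t1 t2 h lE *.
  have Pn : P != 0 by rewrite gt_eqF.
  have -> : h - t = (z + 1 / 6 - P * t) / P by rewrite /h; field.
  rewrite lE (_ : 1 / (3 * (2 * P)) = (1 / 6) / P); last by field.
  rewrite normrM normfV (ger0_norm (ltW p0)) ler_pM2r ?invr_gt0 //.
  rewrite ler_norml; apply/andP; split; lra.
apply: dist1_le => //.
have q : (0:R) < 3 * 2 ^+ l by rewrite mulr_gt0 // exprn_gt0.
rewrite ltr_pdivrMr // mul1r.
have : (1 : R) <= 2 ^+ l by apply: exprn_ege1; lra.
lra.
Qed.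
End F.

Unset Implicit Arguments. Set Strict Implicit.

Theorem mainTheorem4 (R : realType) (l N : nat) (eps theta : R) :
  (0 < l)%N -> 0 < eps < 1 -> 0 <= theta < 1 -> (0 < N)%N ->
  534 / 100 * ln (4 * l%:R / eps) <= N%:R ->
  1 - eps <=
    prob theta (fun w : outcome l N =>
      in_arc (zfinal w / 2 ^+ l.-1) ((zfinal w + 1 / 3) / 2 ^+ l.-1) theta)
  /\
  1 - eps <=
    prob theta (fun w : outcome l N =>
      dist1 (theta_hat w) theta <= 1 / (3 * 2 ^+ l)).
Proof.
move=> l0 /andP[e0 e1] hth N0 hN.
pose d : R := Num.sqrt (25 / 267).
have d2 : d ^+ 2 = 25 / 267 by rewrite sqr_sqrtr //; lra.
have d0 : 0 <= d by apply: sqrtr_ge0.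
pose px (k : 'I_l) : R := (1 + cos (2 * pi * 2 ^+ k * theta)) / 2.
pose py (k : 'I_l) : R := (1 + sin (2 * pi * 2 ^+ k * theta)) / 2.
have hpx k : 0 <= px k <= 1.
  by rewrite /px; have := cos_geN1 (2 * pi * 2 ^+ k * theta);
    have := cos_le1 (2 * pi * 2 ^+ k * theta); move=> ? ?; apply/andP; split; lra.
have hpy k : 0 <= py k <= 1.
  by rewrite /py; have := sin_geN1 (2 * pi * 2 ^+ k * theta);
    have := sin_le1 (2 * pi * 2 ^+ k * theta); move=> ? ?; apply/andP; split; lra.
pose F k (t : 'I_N.+1 * 'I_N.+1) := binom_pmf N (px k) t.1 * binom_pmf N (py k) t.2.
have F1 k : \sum_t F k t = 1.
  have h := @pair_marg R 'I_N.+1 'I_N.+1 (fun j : 'I_N.+1 => binom_pmf N (px k) j) (fun j : 'I_N.+1 => binom_pmf N (py k) j) xpredT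
    (binom_sum _ _).
  by rewrite binom_sum in h; exact: h.
have f0 (w : outcome l N) : 0 <= joint_pmf theta w.
  by apply: prodr_ge0 => k _; apply: mulr_ge0; apply: binom_ge0; [exact: hpx | exact: hpy].
have f1 : \sum_(w : outcome l N) joint_pmf theta w = 1.
  have h := @marg R l _ F xpredT (Ordinal l0) F1.
  by rewrite -(F1 (Ordinal l0)); exact: h.
pose e := expR (- (2 * N%:R * d ^+ 2)).
pose B k (w : outcome l N) := d <= `|((w k).1)%:R / N%:R - px k|.
pose C k (w : outcome l N) := d <= `|((w k).2)%:R / N%:R - py k|.
have PB k : \sum_(w | `[< B k w >]) joint_pmf theta w <= 2 * e.
  rewrite (eq_bigl (fun w : outcome l N =>
     (fun t : 'I_N.+1 * 'I_N.+1 => d <= `|(t.1)%:R / N%:R - px k|) (w k))); last first.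
    by move=> w; rewrite asboolb.
  rewrite [X in X <= _](_ : _ = \sum_(t : 'I_N.+1 * 'I_N.+1 | d <= `|(t.1)%:R / N%:R - px k|) F k t); last first.
    exact: (@marg R l _ F (fun t : 'I_N.+1 * 'I_N.+1 => d <= `|(t.1)%:R / N%:R - px k|) k F1).
  have h := @pair_marg R 'I_N.+1 'I_N.+1 (fun j : 'I_N.+1 => binom_pmf N (px k) j) (fun j : 'I_N.+1 => binom_pmf N (py k) j)
    (fun j : 'I_N.+1 => d <= `|j%:R / N%:R - px k|) (binom_sum _ _).
  rewrite /F h; exact: tail_two.
have PC k : \sum_(w | `[< C k w >]) joint_pmf theta w <= 2 * e.
  rewrite (eq_bigl (fun w : outcome l N =>
     (fun t : 'I_N.+1 * 'I_N.+1 => d <= `|(t.2)%:R / N%:R - py k|) (w k))); last first.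
    by move=> w; rewrite asboolb.
  rewrite [X in X <= _](_ : _ = \sum_(t : 'I_N.+1 * 'I_N.+1 | d <= `|(t.2)%:R / N%:R - py k|) F k t); last first.
    exact: (@marg R l _ F (fun t : 'I_N.+1 * 'I_N.+1 => d <= `|(t.2)%:R / N%:R - py k|) k F1).
  have h := @pair_marg2 R 'I_N.+1 'I_N.+1 (fun j : 'I_N.+1 => binom_pmf N (px k) j) (fun j : 'I_N.+1 => binom_pmf N (py k) j)
    (fun j : 'I_N.+1 => d <= `|j%:R / N%:R - py k|) (binom_sum _ _).
  rewrite /F h; exact: tail_two.
have hsum : \sum_k (\sum_(w | `[< B k w >]) joint_pmf theta w +
                    \sum_(w | `[< C k w >]) joint_pmf theta w) <= eps.
  apply: le_trans (_ : \sum_(k < l) (4 * e) <= _).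
    by apply: ler_sum => k _; have := PB k; have := PC k; lra.
  rewrite sumr_const card_ord -[_ *+ l]mulr_natr.
  have lr : (0 : R) < l%:R by rewrite ltr0n.
  have L0 : (0 : R) < 4 * l%:R / eps by rewrite divr_gt0 // mulr_gt0.
  have he : e <= (4 * l%:R / eps)^-1.
    rewrite /e -(lnK (x := 4 * l%:R / eps)); last by rewrite posrE.
    rewrite -expRN ler_expR d2; lra.
  rewrite invf_div in he.
  have E4 : 4 * (eps / (4 * l%:R)) * l%:R = eps.
    by field; rewrite gt_eqF.
  by rewrite -[X in _ <= X]E4 ler_pM2r // ler_pM2l.
have good w : (forall k, ~ B k w /\ ~ C k w) ->
  in_arc (zfinal w / 2 ^+ l.-1) ((zfinal w + 1 / 3) / 2 ^+ l.-1) theta /\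
  dist1 (theta_hat w) theta <= 1 / (3 * 2 ^+ l).
  move=> h; apply: (@main_good R l N theta d w) => // k.
  have [hb hc] := h k.
  by split; rewrite ltNge; apply/negP.
split.
  apply: le_trans _ (union_bound f0 f1 (fun w h => (good w h).1)); lra.
apply: le_trans _ (union_bound f0 f1 (fun w h => (good w h).2)); lra.
Qed.
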